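(* Let $b_{10}>0$, $b_{11}\ge0$, $c_{01}\ge0$, $c_{11}\ge0$, and define $\gamma'=\frac{c_{01}}{b_{10}}$, $\delta'=\frac{b_{10}-b_{11}+c_{11}-c_{01}}{b_{10}}$. Let $\mathcal{F}=\{(P_{11},t): P_{11}\in[0,1],\ P_{11}-1\le t\le P_{11}\}$ and $\mathcal{P}=\{(P_{11},t)\in\mathcal{F}: t>\gamma'+\delta'P_{11}\}$. Then $\mathcal{P}$ contains a pair $(P_{11},t)$ with $t<0$ if and only if $c_{11}<b_{11}-b_{10}$.
   Context: Double binary causal classification: $P_{11}$ is the probability of the positive outcome under the positive treatment, $t=P_{11}-P_{10}$ the estimated individual treatment effect, $b_{ij}$ the benefit of outcome $i$ under treatment $j$ and $c_{ij}$ the cost of outcome $i$ under treatment $j$, normalized so that $c_{00}=c_{10}=0$, $b_{00}=b_{01}=0$. The cost-sensitive causal decision boundary is $t=\gamma'+\delta'P_{11}$ and $\mathcal{P}$ is the positive treatment set. *)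

(* Defs.v *)
From Stdlib Require Import Reals.
Open Scope R_scope.

Definition gamma' (b10 c01 : R) : R := c01 / b10.
Definition delta' (b10 b11 c01 c11 : R) : R := (b10 - b11 + c11 - c01) / b10.

Definition feasible (P11 t : R) : Prop :=
  0 <= P11 <= 1 /\ P11 - 1 <= t <= P11.

Definition pos_treat_set (b10 b11 c01 c11 : R) (P11 t : R) : Prop :=
  feasible P11 t /\ t > gamma' b10 c01 + delta' b10 b11 c01 c11 * P11.

(* Main.v *)
Require Import Defs.
From Stdlib Require Import Reals Lra Psatz.
Open Scope R_scope.

Theorem theorem3 (b10 b11 c01 c11 : R)
  (hb10 : 0 < b10) (hb11 : 0 <= b11) (hc01 : 0 <= c01) (hc11 : 0 <= c11) :
  (exists P11 t : R, pos_treat_set b10 b11 c01 c11 P11 t /\ t < 0)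
  <-> c11 < b11 - b10.
Proof.
  unfold pos_treat_set, feasible, gamma', delta'.
  assert (E : forall P, c01 / b10 + (b10 - b11 + c11 - c01) / b10 * P
            = (c01 * (1 - P) + (b10 - b11 + c11) * P) / b10)
    by (intros; field; lra).
  split.
  - intros [P [t [[[HP Ht] Hg] Hn]]].
    rewrite E in Hg.
    apply Rmult_gt_compat_r with (r := b10) in Hg; [|lra].
    unfold Rdiv in Hg. rewrite Rmult_assoc, Rinv_l, Rmult_1_r in Hg; [|lra].
    destruct (Rlt_or_le c11 (b11 - b10)) as [H|H]; [exact H|].
    exfalso.
    assert (0 <= c01 * (1 - P)) by (apply Rmult_le_pos; lra).
    assert (0 <= (b10 - b11 + c11) * P) by (apply Rmult_le_pos; lra).
    nra.
  - intros H.
    set (m := b11 - b10 - c11).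
    set (e := m / (2 * (m + b10 + c01))).
    assert (Hm : 0 < m) by (unfold m; lra).
    assert (He0 : 0 < e) by (unfold e; apply Rdiv_lt_0_compat; lra).
    assert (Hek : e * (2 * (m + b10 + c01)) = m) by (unfold e; field; lra).
    assert (He1 : e < 1) by nra.
    exists (1 - e), (- e).
    split; [|lra].
    split; [split; lra|].
    rewrite E.
    apply Rmult_lt_reg_r with (r := b10); [lra|].
    unfold Rdiv. rewrite Rmult_assoc, Rinv_l, Rmult_1_r; [|lra].
    replace (b10 - b11 + c11) with (- m) by (unfold m; ring).
    nra.
Qed.
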